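(* Let $F:\mathbb{R}^n\to\mathbb{R}^m$ be continuously differentiable around $\bar x$, let $g:\mathbb{R}^m\to\mathbb{R}\cup\{\infty\}$ be lower semicontinuous and convex with $\bar y:=F(\bar x)\in\operatorname{dom}g$, and let $\bar y^*\in\partial g(\bar y)$. Assume the second-order qualification condition (SOQC) holds at $\bar x$ for $\bar y^*$, i.e., for every $L\in\mathcal{S}(\partial g)(\bar y,\bar y^* )$, $\nabla F(\bar x)^Tv^*=0$ and $(0,v^* )\in L$ imply $v^*=0$. Then there is a neighborhood $\mathcal{V}\subset\mathbb{R}^n\times\mathbb{R}^m\times\mathbb{R}^m$ of $(\bar x,\bar y^*,0)$ such that for all $(\tilde x,\tilde y^*,b)\in\mathcal{V}$ with $\tilde y^*\in\partial g(F(\tilde x)+b)$ one has: for every $L\in\mathcal{S}(\partial g)(F(\tilde x)+b,\tilde y^* )$, $\nabla F(\tilde x)^Tv^*=0$ and $(0,v^* )\in L$ imply $v^*=0$; i.e., SOQC holds for $g\circ F_b$ at $\tilde x$ for $\tilde y^*$, where $F_b(x):=F(x)+b$.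
   Context: $\partial g$ is the convex subdifferential. Tangent cone: $T_\Omega(\bar z)=\operatorname{Limsup}_{t\downarrow0}(\Omega-\bar z)/t$. SC derivative: let $\mathcal{Z}_m$ be the set of $m$-dimensional linear subspaces of $\mathbb{R}^m\times\mathbb{R}^m$ with metric $d(L_1,L_2)=\|P_{L_1}-P_{L_2}\|$ ($P_L$ orthogonal projection onto $L$); let $\mathcal{O}$ be the set of $(y,y^* )\in\operatorname{gph}\partial g$ at which $T_{\operatorname{gph}\partial g}(y,y^* )$ is an $m$-dimensional subspace. Then $\mathcal{S}(\partial g)(y,y^* )$ is the set of $L\in\mathcal{Z}_m$ for which there exist $(y_k,y_k^* )\in\mathcal{O}$, $(y_k,y_k^* )\to(y,y^* )$, with $d(T_{\operatorname{gph}\partial g}(y_k,y_k^* ),L)\to0$. *)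

(* Defs.v *)
(* Vectors of R^k are row vectors 'rV[R]_k;
   R^m x R^m is identified with 'rV[R]_(m+m) via row_mx y y*. *)
From HB Require Import structures.
From mathcomp Require Import all_boot all_order all_algebra.
From mathcomp Require Import all_classical all_reals.
From mathcomp Require Import topology normedtype sequences derive.
Set Implicit Arguments. Unset Strict Implicit. Unset Printing Implicit Defensive.
Import Order.TTheory GRing.Theory Num.Theory.
Import numFieldNormedType.Exports.
Local Open Scope classical_set_scope.
Local Open Scope ring_scope.

Section Defs.
Variable R : realType.

Definition dotv (p : nat) (u v : 'rV[R]_p) : R := \sum_(i < p) u ord0 i * v ord0 i.
Definition enorm (p : nat) (v : 'rV[R]_p) : R := Num.sqrt (dotv v v).

Definition opnorm (p : nat) (A : 'M[R]_p) : R :=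
  sup [set enorm (v *m A) | v in [set v : 'rV[R]_p | enorm v <= 1]].

Definition is_subspace_dim (p k : nat) (L : set 'rV[R]_p) : Prop :=
  exists B : 'M[R]_(k, p), \rank B = k /\ L = [set v | (v <= B)%MS].

Definition is_orth_proj (p : nat) (L : set 'rV[R]_p) (P : 'M[R]_p) : Prop :=
  forall v, L (v *m P) /\ (forall u, L u -> dotv (v - v *m P) u = 0).

Definition proj_mx (p : nat) (L : set 'rV[R]_p) : 'M[R]_p :=
  xget 0 [set P | is_orth_proj L P].

Definition sub_dist (p : nat) (L1 L2 : set 'rV[R]_p) : R :=
  opnorm (proj_mx L1 - proj_mx L2).

Definition tangent_cone (p : nat) (Om : set 'rV[R]_p) (z : 'rV[R]_p) : set 'rV[R]_p :=
  [set w | exists (t : nat -> R) (w_ : nat -> 'rV[R]_p),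
     (forall k, 0 < t k) /\ t @ \oo --> 0 /\ w_ @ \oo --> w /\
     (forall k, Om (z + t k *: w_ k))].

Definition subdiff (m : nat) (g : 'rV[R]_m -> \bar R) (y : 'rV[R]_m) : set 'rV[R]_m :=
  [set ys | g y \is a fin_num /\
     forall z, (g y + (dotv ys (z - y))%:E <= g z)%E].

Definition gph_subdiff (m : nat) (g : 'rV[R]_m -> \bar R) : set 'rV[R]_(m + m) :=
  [set z | exists y ys, subdiff g y ys /\ z = row_mx y ys].

Definition O_set (m : nat) (g : 'rV[R]_m -> \bar R) (y ys : 'rV[R]_m) : Prop :=
  subdiff g y ys /\
  is_subspace_dim m (tangent_cone (gph_subdiff g) (row_mx y ys)).

Definition SCderiv (m : nat) (g : 'rV[R]_m -> \bar R) (y ys : 'rV[R]_m)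
    (L : set 'rV[R]_(m + m)) : Prop :=
  is_subspace_dim m L /\
  exists (y_ ys_ : nat -> 'rV[R]_m),
    (forall k, O_set g (y_ k) (ys_ k)) /\
    y_ @ \oo --> y /\ ys_ @ \oo --> ys /\
    (fun k => sub_dist (tangent_cone (gph_subdiff g) (row_mx (y_ k) (ys_ k))) L)
      @ \oo --> (0 : R).

(* Second-order qualification condition, with J = the Jacobian in mathcomp's
   row convention (h *m J = 'd F x h), i.e. J = (nabla F(x))^T.
   nabla F(x)^T v* = 0 reads  v* *m J^T = 0. *)
Definition SOQC (n m : nat) (g : 'rV[R]_m -> \bar R) (J : 'M[R]_(n, m))
    (y ys : 'rV[R]_m) : Prop :=
  forall L, SCderiv g y ys L ->
    forall vs : 'rV[R]_m, vs *m J^T = 0 -> L (row_mx 0 vs) -> vs = 0.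

Definition convex_ext (m : nat) (g : 'rV[R]_m -> \bar R) : Prop :=
  forall (x y : 'rV[R]_m) (l : R), 0 < l < 1 ->
    (g (l *: x + (1 - l) *: y)%R <= l%:E * g x + (1 - l)%:E * g y)%E.

Definition C1_around (n m : nat) (F : 'rV[R]_n -> 'rV[R]_m) (x : 'rV[R]_n) : Prop :=
  exists2 U, nbhs x U &
    (forall z, U z -> differentiable F z) /\
    (forall z, U z -> {for z, continuous (fun u => 'J F u)}).

End Defs.

(* Main.v *)
Require Import Defs.
From HB Require Import structures.
From mathcomp Require Import all_boot all_order all_algebra.
From mathcomp Require Import all_classical all_reals.
From mathcomp Require Import topology normedtype sequences derive.
From mathcomp Require Import ring lra.
From mathcomp Require Import interval_inference.
Import Order.TTheory GRing.Theory Num.Theory.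
Import numFieldNormedType.Exports.
Local Open Scope classical_set_scope.
Local Open Scope ring_scope.
Set Implicit Arguments. Unset Strict Implicit. Unset Printing Implicit Defensive.
Section H.
Variable R : realType.

Lemma mul_self_ge0 (x : R) : 0 <= x * x.
Proof. by rewrite -expr2 sqr_ge0. Qed.

Lemma dotvE p (u v : 'rV[R]_p) : dotv u v = (u *m v^T) ord0 ord0.
Proof. rewrite /dotv !mxE; apply: eq_bigr => i _; by rewrite mxE. Qed.

Lemma dotvC p (u v : 'rV[R]_p) : dotv u v = dotv v u.
Proof. rewrite /dotv; apply: eq_bigr => i _; by rewrite mulrC. Qed.

Lemma dotv_ge0 p (v : 'rV[R]_p) : 0 <= dotv v v.
Proof. apply: sumr_ge0 => i _; exact: mul_self_ge0. Qed.

Lemma enorm_ge0 p (v : 'rV[R]_p) : 0 <= enorm v.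
Proof. exact: sqrtr_ge0. Qed.

Lemma enorm_sq p (v : 'rV[R]_p) : enorm v ^+ 2 = dotv v v.
Proof. by rewrite /enorm sqr_sqrtr // dotv_ge0. Qed.

Lemma abs_le_enorm p (v : 'rV[R]_p) i : `|v ord0 i| <= enorm v.
Proof.
rewrite /enorm -sqrtr_sqr ler_sqrt ?dotv_ge0 //.
rewrite /dotv (bigD1 i) //= expr2 lerDl sumr_ge0 // => j _; exact: mul_self_ge0.
Qed.

Lemma sum_sq_le (I : Type) (r : seq I) (P : pred I) (a : I -> R) :
  (forall i, 0 <= a i) ->
  \sum_(i <- r | P i) a i ^+ 2 <= (\sum_(i <- r | P i) a i) ^+ 2.
Proof.
move=> a0; elim: r => [|x r IH]; first by rewrite !big_nil expr0n.
rewrite !big_cons; case: (P x) => //.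
have S0 : 0 <= \sum_(i <- r | P i) a i by apply: sumr_ge0.
have := a0 x; nra.
Qed.

Lemma enorm_le_sum p (v : 'rV[R]_p) : enorm v <= \sum_i `|v ord0 i|.
Proof.
rewrite /enorm -(ger0_norm (sumr_ge0 _ (fun i _ => normr_ge0 (v ord0 i)))).
rewrite -sqrtr_sqr ler_sqrt; last by apply: sqr_ge0.
have := @sum_sq_le 'I_p (index_enum _) xpredT (fun i => `|v ord0 i|) (fun i => normr_ge0 _).
apply: le_trans; rewrite /dotv.
by apply: ler_sum => i _; rewrite real_normK ?num_real // expr2.
Qed.

Lemma enormZ p c (v : 'rV[R]_p) : enorm (c *: v) = `|c| * enorm v.
Proof.
rewrite /enorm /dotv.
rewrite (eq_bigr (fun i => c ^+ 2 * (v ord0 i * v ord0 i))); last first.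
  by move=> i _; rewrite !mxE; rewrite expr2; ring.
by rewrite -mulr_sumr sqrtrM ?sqr_ge0 // sqrtr_sqr.
Qed.

Lemma enorm_eq0 p (v : 'rV[R]_p) : enorm v = 0 -> v = 0.
Proof.
move=> /eqP; rewrite sqrtr_eq0 => h.
have h0 : dotv v v = 0 by apply/eqP; rewrite eq_le h dotv_ge0.
move: h0; rewrite /dotv => /psumr_eq0P H.
apply/rowP => i; rewrite [RHS]mxE.
have /eqP := H (fun j _ => mul_self_ge0 _) i isT.
by rewrite mulf_eq0 orbb => /eqP.
Qed.

Lemma enorm0 p : enorm (0 : 'rV[R]_p) = 0.
Proof. by rewrite /enorm /dotv big1 ?sqrtr0 // => i _; rewrite mxE mul0r. Qed.

Lemma dotv_row0 m (v : 'rV[R]_m) :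
  dotv (row_mx (0 : 'rV[R]_m) v) (row_mx (0 : 'rV[R]_m) v) = dotv v v.
Proof.
rewrite /dotv big_split_ord /= big1 ?add0r; last by move=> i _; rewrite row_mxEl mxE mul0r.
by apply: eq_bigr => i _; rewrite row_mxEr.
Qed.

Lemma enorm_row0 m (v : 'rV[R]_m) : enorm (row_mx (0 : 'rV[R]_m) v) = enorm v.
Proof. by rewrite /enorm dotv_row0. Qed.

Definition N1 p q (A : 'M[R]_(p, q)) : R := \sum_j \sum_i `|A i j|.

Lemma N1_ge0 p q (A : 'M[R]_(p, q)) : 0 <= N1 A.
Proof. by apply: sumr_ge0 => j _; apply: sumr_ge0. Qed.

Lemma enorm_mul_le p q (u : 'rV[R]_p) (A : 'M[R]_(p, q)) :
  enorm (u *m A) <= enorm u * N1 A.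
Proof.
apply: le_trans (enorm_le_sum _) _.
rewrite /N1 mulr_sumr; apply: ler_sum => j _; rewrite mxE mulr_sumr.
apply: le_trans (ler_norm_sum _ _ _) _; apply: ler_sum => i _.
by rewrite normrM ler_wpM2r // abs_le_enorm.
Qed.


Lemma opnorm_has_sup p (A : 'M[R]_p) :
  has_sup [set enorm (v *m A) | v in [set v : 'rV[R]_p | enorm v <= 1]].
Proof.
split; first by exists (enorm (0 *m A)), 0 => //=; rewrite enorm0 ler01.
exists (N1 A) => _ [u /= hu <-].
apply: le_trans (enorm_mul_le u A) _.
by rewrite -[X in _ <= X]mul1r ler_wpM2r // N1_ge0.
Qed.

Lemma opnorm_ub p (A : 'M[R]_p) v : enorm v <= 1 -> enorm (v *m A) <= opnorm A.
Proof. by move=> hv; apply: sup_upper_bound; [exact: opnorm_has_sup| exists v]. Qed.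

Lemma opnorm_le p (A : 'M[R]_p) : opnorm A <= N1 A.
Proof.
apply: ge_sup; first by case: (opnorm_has_sup A).
move=> _ [u /= hu <-]; apply: le_trans (enorm_mul_le u A) _.
by rewrite -[X in _ <= X]mul1r ler_wpM2r // N1_ge0.
Qed.

Lemma opnorm_ge0 p (A : 'M[R]_p) : 0 <= opnorm A.
Proof.
have := @opnorm_ub p A 0; rewrite mul0mx enorm0; apply; exact: ler01.
Qed.

Lemma cvg_sumR (I : finType) (f : I -> nat -> R) (l : I -> R) :
  (forall i, f i @ \oo --> l i) ->
  (fun n => \sum_i f i n) @ \oo --> \sum_i l i.
Proof.
move=> H; apply: cvg_big => //; exact: add_continuous.
Qed.

Lemma ball_seq_cvg (T : pseudoMetricType R) (a : T) (x : nat -> T) :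
  (forall k, ball a k.+1%:R^-1 (x k)) -> x @ \oo --> a.
Proof.
move=> H; apply/cvg_ballP => e e0; near=> k; apply: le_ball (H k).
by apply: ltW; near: k; exact: (near_infty_natSinv_lt (PosNum e0)).
Unshelve. all: end_near. Qed.

Lemma lim_eqR (u : nat -> R) (a b : R) : u @ \oo --> a -> u @ \oo --> b -> a = b.
Proof. move=> ha hb; exact: (cvg_unique _ ha hb). Qed.


Lemma dotvBl p (a b u : 'rV[R]_p) : dotv (a - b) u = dotv a u - dotv b u.
Proof. by rewrite /dotv -sumrB; apply: eq_bigr => i _; rewrite !mxE mulrBl. Qed.

Lemma dotv_delta p (w : 'rV[R]_p) i : dotv (delta_mx 0 i) w = w ord0 i.
Proof. by rewrite dotvE -rowE !mxE. Qed.

Lemma free_by_ker m n (A : 'M[R]_(m, n)) :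
  (forall w : 'rV_m, w *m A = 0 -> w = 0) -> row_free A.
Proof. by move=> H; rewrite -kermx_eq0; apply/rowV0P => v /sub_kermxP /H. Qed.

Lemma subsp_sub p k (L : set 'rV[R]_p) u w :
  is_subspace_dim k L -> L u -> L w -> L (u - w).
Proof.
move=> [B [_ ->]] /= hu hw; rewrite addmx_sub //.
by rewrite (eqmx_opp w).
Qed.

Lemma orth_fix p k (L : set 'rV[R]_p) P u :
  is_subspace_dim k L -> is_orth_proj L P -> L u -> u *m P = u.
Proof.
move=> HL HP Lu; have [Lp Lo] := HP u.
have Ld := subsp_sub HL Lu Lp.
have := Lo _ Ld => /(congr1 (@Num.sqrt R)); rewrite sqrtr0 => /enorm_eq0 /eqP.
by rewrite subr_eq0 => /eqP.
Qed.

Lemma mx_eq_by_rows p (P Q : 'M[R]_p) :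
  (forall v : 'rV_p, v *m P = v *m Q) -> P = Q.
Proof. by move=> H; apply/row_matrixP => i; rewrite !rowE H. Qed.

Lemma orth_idem p k (L : set 'rV[R]_p) P :
  is_subspace_dim k L -> is_orth_proj L P -> P *m P = P.
Proof.
move=> HL HP; apply: mx_eq_by_rows => v.
by rewrite mulmxA (orth_fix HL HP) //; case: (HP v).
Qed.

Lemma orth_uniq p k (L : set 'rV[R]_p) P Q :
  is_subspace_dim k L -> is_orth_proj L P -> is_orth_proj L Q -> P = Q.
Proof.
move=> HL HP HQ; apply: mx_eq_by_rows => v.
have [LP oP] := HP v; have [LQ oQ] := HQ v.
have Ld := subsp_sub HL LP LQ.
have E : v *m P - v *m Q = (v - v *m Q) - (v - v *m P).
  by rewrite opprB [RHS]addrC addrA subrK.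
have : dotv (v *m P - v *m Q) (v *m P - v *m Q) = 0.
  by rewrite {1}E dotvBl oP // oQ // subrr.
move=> /(congr1 (@Num.sqrt R)); rewrite sqrtr0 => /enorm_eq0 /eqP.
by rewrite subr_eq0 => /eqP.
Qed.

Lemma orth_sym p k (L : set 'rV[R]_p) P :
  is_subspace_dim k L -> is_orth_proj L P -> P^T = P.
Proof.
move=> HL HP.
have key : forall i j, P j i = dotv (delta_mx 0 i *m P) (delta_mx 0 j *m P).
  move=> i j; have [Lj _] := HP (delta_mx 0 j).
  have [_ oi] := HP (delta_mx 0 i).
  have := oi _ Lj; rewrite dotvBl dotv_delta -rowE mxE => /eqP.
  by rewrite subr_eq0 => /eqP.
apply/matrixP => i j; rewrite mxE key (key j i) dotvC //.
Qed.

Lemma orth_exists p k (L : set 'rV[R]_p) :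
  is_subspace_dim k L -> exists P, is_orth_proj L P.
Proof.
move=> [B [rB ->]].
have fB : row_free B by rewrite /row_free rB.
pose G := B *m B^T.
have uG : G \in unitmx.
  rewrite -row_free_unit; apply: free_by_ker => w hw.
  have h : dotv (w *m B) (w *m B) = 0.
    by rewrite dotvE trmx_mul mulmxA -(mulmxA w) -/G hw mul0mx mxE.
  move: h => /(congr1 (@Num.sqrt R)); rewrite sqrtr0 => /enorm_eq0 /eqP.
  by rewrite mulmx_free_eq0 // => /eqP.
exists (B^T *m invmx G *m B) => v; split => /=.
  by rewrite mulmxA submxMl.
move=> u /submxP [x ->].
rewrite dotvE trmx_mul mulmxA mulmxBl.
rewrite -!mulmxA (mulmxA B B^T) -/G (mulmxA (invmx G)) mulVmx // mul1mx.
by rewrite subrr mxE.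
Qed.

Lemma proj_mx_spec p k (L : set 'rV[R]_p) :
  is_subspace_dim k L -> is_orth_proj L (Defs.proj_mx L).
Proof. by move=> HL; apply: xgetPex; exact: orth_exists HL. Qed.




Lemma rank_le_idem p (P Q : 'M[R]_p) :
  P *m P = P -> N1 (P - Q) < 1 -> (\rank P <= \rank Q)%N.
Proof.
move=> hP hN; pose B := row_base P.
have fBQ : row_free (B *m Q).
  apply: free_by_ker => w hw.
  pose u := w *m B.
  have uP : u *m P = u.
    have : (u <= P)%MS by rewrite -(eq_row_base P) submxMl.
    by move/submxP => [x ->]; rewrite -mulmxA hP.
  have uQ : u *m Q = 0 by rewrite /u -mulmxA.
  have hu : enorm u <= enorm u * N1 (P - Q).
    by rewrite -{1}uP -[u *m P]subr0 -uQ -mulmxBr enorm_mul_le.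
  have e0 := enorm_ge0 u; have n0 := N1_ge0 (P - Q).
  have : enorm u = 0 by nra.
  move/enorm_eq0 => /eqP; rewrite mulmx_free_eq0 ?row_base_free //.
  by move/eqP.
have -> : \rank P = \rank (B *m Q) by move: fBQ; rewrite /row_free => /eqP ->.
exact: mxrankM_maxr.
Qed.

Lemma N1_sym p q (P Q : 'M[R]_(p, q)) : N1 (P - Q) = N1 (Q - P).
Proof.
by apply: eq_bigr => j _; apply: eq_bigr => i _; rewrite !mxE distrC.
Qed.

Lemma rank_orth p k (L : set 'rV[R]_p) P :
  is_subspace_dim k L -> is_orth_proj L P -> \rank P = k.
Proof.
move=> HL HP; have HL' := HL; case: HL' => [B [rB EL]].
rewrite -rB; apply/eqP; rewrite eqn_leq; apply/andP; split; apply: mxrankS.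
  apply/row_subP => i; rewrite rowE.
  by have [+ _] := HP (delta_mx 0 i); rewrite EL.
apply/row_subP => i.
have Li : L (row i B) by rewrite EL /= row_sub.
by rewrite -(orth_fix HL HP Li) submxMl.
Qed.

Lemma subspace_of_rank p k (A : 'M[R]_p) :
  \rank A = k -> is_subspace_dim k [set v | (v <= A)%MS].
Proof.
move=> <-; exists (row_base A); split; first by rewrite (eq_row_base A).
by apply/predeqP => v /=; rewrite eq_row_base.
Qed.

Lemma orth_of_symidem p (P : 'M[R]_p) :
  P^T = P -> P *m P = P -> is_orth_proj [set v | (v <= P)%MS] P.
Proof.
move=> hs hi v; split => /=; first exact: submxMl.
move=> u /submxP [x ->].
rewrite dotvE trmx_mul hs mulmxA mulmxBl -(mulmxA v P P) hi subrr mul0mx mxE //.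
Qed.


Lemma symidem_entry_le1 p (P : 'M[R]_p) i j :
  P^T = P -> P *m P = P -> `|P i j| <= 1.
Proof.
move=> hs hi.
have Pii : P i i = \sum_l P i l ^+ 2.
  rewrite -{1}hi mxE; apply: eq_bigr => l _.
  by rewrite expr2 -{2}hs mxE.
have sq_le : forall l, P i l ^+ 2 <= P i i.
  move=> l; rewrite Pii (bigD1 l) //= lerDl sumr_ge0 // => l' _; exact: sqr_ge0.
have h1 := sq_le i; have h2 := sq_le j.
have h0 : 0 <= P i i by apply: le_trans (sqr_ge0 (P i j)) h2.
have hii : P i i <= 1 by move: h1; rewrite expr2 => h1; nra.
rewrite -(ler_pXn2r (n := 2)) ?nnegrE ?normr_ge0 ?ler01 // expr1n real_normK ?num_real //.
exact: le_trans h2 hii.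
Qed.

Lemma SC_pick m (g : 'rV[R]_m -> \bar R) y ys L (e : R) :
  SCderiv g y ys L -> 0 < e -> exists Y YS, O_set g Y YS /\ ball y e Y /\
    ball ys e YS /\ sub_dist (tangent_cone (gph_subdiff g) (row_mx Y YS)) L < e.
Proof.
move=> [_ [y_ [ys_ [HO [hy [hys hd]]]]]] e0.
have a : \forall k \near \oo, ball y e (y_ k) by apply: cvg_ball.
have b : \forall k \near \oo, ball ys e (ys_ k) by apply: cvg_ball.
have c : \forall k \near \oo, ball (0:R) e
    (sub_dist (tangent_cone (gph_subdiff g) (row_mx (y_ k) (ys_ k))) L).
  by apply: cvg_ball.
have [j [[hj1 hj2] hj3]] := filter_ex (filterI (filterI a b) c).
exists (y_ j), (ys_ j); split => //; split => //; split => //.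
move: hj3; rewrite /ball /= sub0r normrN; exact: le_lt_trans (ler_norm _).
Qed.

Lemma cvg_coord q r (M : nat -> 'M[R]_(q, r)) (A : 'M[R]_(q, r)) i j :
  M @ \oo --> A -> (fun k => M k i j) @ \oo --> A i j.
Proof. move=> h; exact: (cvg_comp _ _ h (@coord_continuous _ _ _ i j A)). Qed.


Lemma ball_normP (V : normedModType R) (x y : V) (e : R) :
  ball x e y = (`|x - y| < e).
Proof. by rewrite -ball_normE. Qed.

Lemma cvg_mul_entry q r s (A : nat -> 'M[R]_(q, r)) (B : nat -> 'M[R]_(r, s)) (A0 : 'M[R]_(q, r)) (B0 : 'M[R]_(r, s)) :
  (forall i j, (fun k => A k i j) @ \oo --> A0 i j) ->
  (forall i j, (fun k => B k i j) @ \oo --> B0 i j) ->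
  forall i j, (fun k => (A k *m B k) i j) @ \oo --> (A0 *m B0) i j.
Proof.
move=> hA hB i j; rewrite mxE.
have -> : (fun k => (A k *m B k) i j) = fun k => \sum_l A k i l * B k l j.
  by apply: funext => k; rewrite mxE.
apply: cvg_sumR => l; exact: cvgM.
Qed.

Lemma cvg_N1 q r (M : nat -> 'M[R]_(q, r)) (A : 'M[R]_(q, r)) :
  (forall i j, (fun k => M k i j) @ \oo --> A i j) ->
  (fun k => N1 (M k - A)) @ \oo --> 0.
Proof.
move=> hM.
have h : (fun k => N1 (M k - A)) @ \oo --> \sum_j \sum_i `|A i j - A i j|.
  rewrite /N1; apply: cvg_sumR => j; apply: cvg_sumR => i.
  have -> : (fun k => `|(M k - A) i j|) = fun k => `|M k i j - A i j|.
    by apply: funext => k; rewrite !mxE.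
  apply: cvg_norm; apply: cvgB => //; exact: cvg_cst.
move: h; rewrite big1 // => j _; rewrite big1 // => i _; by rewrite subrr normr0.
Qed.


Lemma cvg_tr_entry q r (M : nat -> 'M[R]_(q, r)) (A : 'M[R]_(q, r)) :
  (forall i j, (fun k => M k i j) @ \oo --> A i j) ->
  forall i j, (fun k => (M k)^T i j) @ \oo --> A^T i j.
Proof.
move=> h i j; rewrite mxE.
have -> : (fun k => (M k)^T i j) = (fun k => M k j i) by apply: funext => k; rewrite mxE.
exact: h.
Qed.


Lemma entry_sub_le p (a b : 'rV[R]_p) j : `|a ord0 j - b ord0 j| <= enorm (a - b).
Proof. by have := abs_le_enorm (a - b) j; rewrite !mxE. Qed.

End H.

Theorem proposition3p5 (R : realType) (n m : nat)
    (F : 'rV[R]_n -> 'rV[R]_m) (g : 'rV[R]_m -> \bar R)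
    (xbar : 'rV[R]_n) (ybs : 'rV[R]_m) :
  C1_around F xbar ->
  (forall y, g y != -oo%E) ->
  lower_semicontinuous g ->
  convex_ext g ->
  (g (F xbar) < +oo)%E ->
  subdiff g (F xbar) ybs ->
  SOQC g ('J F xbar) (F xbar) ybs ->
  exists2 V : set ('rV[R]_n * ('rV[R]_m * 'rV[R]_m)),
    nbhs (xbar, (ybs, (0 : 'rV[R]_m))) V &
    forall (xt : 'rV[R]_n) (yts b : 'rV[R]_m),
      V (xt, (yts, b)) ->
      subdiff g (F xt + b) yts ->
      SOQC g ('J F xt) (F xt + b) yts.
Proof.
move=> [U Unb [Udiff Jcont]] _ _ _ _ _ Hsoqc.
have xU : U xbar := nbhs_singleton Unb.
have Fcont : {for xbar, continuous F} := differentiable_continuous (Udiff _ xU).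
have Jc : {for xbar, continuous (fun u => 'J F u)} := Jcont _ xU.
apply: contrapT => Hneg.
have Hk : forall k : nat, exists xt yts b L (vs : 'rV[R]_m),
   [/\ ball (xbar, (ybs, (0 : 'rV[R]_m))) k.+1%:R^-1 (xt, (yts, b)),
       SCderiv g (F xt + b) yts L,
       vs *m ('J F xt)^T = 0, L (row_mx 0 vs) & enorm vs = 1].
  move=> k; apply: contrapT => Hn; apply: Hneg.
  exists (ball (xbar, (ybs, (0 : 'rV[R]_m))) k.+1%:R^-1).
    by apply: nbhsx_ballx; rewrite invr_gt0 ltr0n.
  move=> xt yts b hb _ L HL vs hJ hLv.
  apply: contrapT => hv; apply: Hn.
  have ev : enorm vs != 0 by apply/eqP => /enorm_eq0.
  exists xt, yts, b, L, ((enorm vs)^-1 *: vs); split => //.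
  - by rewrite -scalemxAl hJ scaler0.
  - have [B [_ EL]] := HL.1; rewrite EL /= in hLv *.
    have -> : row_mx (0 : 'rV[R]_m) ((enorm vs)^-1 *: vs) = (enorm vs)^-1 *: row_mx (0 : 'rV[R]_m) vs.
      by rewrite scale_row_mx scaler0.
    by rewrite scalemx_sub.
  - by rewrite enormZ ger0_norm ?invr_ge0 ?enorm_ge0 // mulVf.
have /choice [xs H1] := Hk.
have /choice [ysk H2] := H1.
have /choice [bs H3] := H2.
have /choice [Ls H4] := H3.
have /choice [vs H5] := H4.
have hxs : xs @ \oo --> xbar.
  apply: ball_seq_cvg => k; by case: (H5 k) => -[+ _].
have hysk : ysk @ \oo --> ybs.
  apply: ball_seq_cvg => k; by case: (H5 k) => -[_ [+ _]].
have hbs : bs @ \oo --> (0 : 'rV[R]_m).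
  apply: ball_seq_cvg => k; by case: (H5 k) => -[_ [_ +]].

have Hk2 : forall k, exists Y YS, O_set g Y YS /\ ball (F (xs k) + bs k) k.+1%:R^-1 Y /\
    ball (ysk k) k.+1%:R^-1 YS /\
    sub_dist (tangent_cone (gph_subdiff g) (row_mx Y YS)) (Ls k) < k.+1%:R^-1.
  move=> k; apply: SC_pick; first by case: (H5 k).
  by rewrite invr_gt0 ltr0n.
have /choice [Y H6] := Hk2.
have /choice [YS H7] := H6.
pose T k := tangent_cone (gph_subdiff g) (row_mx (Y k) (YS k)).
pose Pk k := Defs.proj_mx (T k).
pose Qk k := Defs.proj_mx (Ls k).
have HT : forall k, is_subspace_dim m (T k) by move=> k; case: (H7 k) => -[_ +] _.
have HL : forall k, is_subspace_dim m (Ls k) by move=> k; case: (H5 k) => _ [+ _].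
have HPo : forall k, is_orth_proj (T k) (Pk k) by move=> k; exact: proj_mx_spec (HT k).
have HQo : forall k, is_orth_proj (Ls k) (Qk k) by move=> k; exact: proj_mx_spec (HL k).
have Psym : forall k, (Pk k)^T = Pk k by move=> k; exact: orth_sym (HT k) (HPo k).
have Pidem : forall k, Pk k *m Pk k = Pk k by move=> k; exact: orth_idem (HT k) (HPo k).
have Prank : forall k, \rank (Pk k) = m by move=> k; exact: rank_orth (HT k) (HPo k).
pose D k := row_mx (mxvec (Pk k)) (vs k).
pose K := [set w : 'rV[R]_((m + m) * (m + m) + m) | forall i, w ord0 i \in `[-1, 1]].
have Kc : compact K.
  have h := (@rV_compact R _ (fun=> `[-1, 1]%classic)); apply: h => _; exact: segment_compact.
have KD : forall k, K (D k).
  move=> k i; rewrite in_itv /= -ler_norml.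
  rewrite /D -(fintype.splitK i); case: (fintype.split i) => [a|a] /=.
    rewrite row_mxEl; case/mxvec_indexP: a => a b; rewrite mxvecE.
    exact: symidem_entry_le1.
  rewrite row_mxEr; have := abs_le_enorm (vs k) a.
  by case: (H5 k) => _ _ _ _ ->.
have [c [_ Cc]] : K `&` cluster (D @ \oo) !=set0.
  by apply: Kc; exists 0%N => // k _; exact: KD.
have Hphi : forall j, exists k, (j <= k)%N /\ ball c j.+1%:R^-1 (D k).
  move=> j.
  have := Cc [set d | exists k, (j <= k)%N /\ d = D k] (ball c j.+1%:R^-1).
  case.
  - by exists j => // k /= hk; exists k.
  - by apply: nbhsx_ballx; rewrite invr_gt0 ltr0n.
  by move=> _ [[k [hk ->]] hb]; exists k.
have /choice [phi Hphi'] := Hphi.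
have phioo : phi @ \oo --> \oo.
  move=> A [N _ HA]; exists N => // j /= hj; apply: HA.
  exact: leq_trans hj (Hphi' j).1.
have HDc : (D \o phi) @ \oo --> c.
  by apply: ball_seq_cvg => j; exact: (Hphi' j).2.

pose P : 'M[R]_(m + m) := \matrix_(i, j) c ord0 (lshift _ (mxvec_index i j)).
pose v : 'rV[R]_m := \row_i c ord0 (rshift _ i).
have hPc : forall i j, (fun k => Pk (phi k) i j) @ \oo --> P i j.
  move=> i j; have h := cvg_coord (i := ord0) (j := lshift _ (mxvec_index i j)) HDc.
  rewrite mxE.
  have -> : (fun k => Pk (phi k) i j) =
      (fun k => (D \o phi) k ord0 (lshift _ (mxvec_index i j))).
    by apply: funext => k; rewrite /D /= row_mxEl mxvecE.
  exact: h.
have hvc : forall i j, (fun k => vs (phi k) i j) @ \oo --> v i j.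
  move=> i j; rewrite (ord1 i); have h := cvg_coord (i := ord0) (j := rshift _ j) HDc.
  rewrite mxE.
  have -> : (fun k => vs (phi k) ord0 j) =
      (fun k => (D \o phi) k ord0 (rshift _ j)).
    by apply: funext => k; rewrite /D /= row_mxEr.
  exact: h.
have hxphi : (xs \o phi) @ \oo --> xbar by exact: (cvg_comp _ _ phioo hxs).
have hJx : ((fun u => 'J F u) \o (xs \o phi)) @ \oo --> 'J F xbar.
  exact: (cvg_comp _ _ hxphi Jc).
have hJc : forall i j, (fun k => ('J F (xs (phi k)))^T i j) @ \oo --> ('J F xbar)^T i j.
  exact: (cvg_tr_entry (fun i j => cvg_coord (i := i) (j := j) hJx)).
have Psy : P^T = P.
  apply/matrixP => i j; rewrite mxE; apply: (lim_eqR (hPc j i)).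
  have -> : (fun k => Pk (phi k) j i) = (fun k => Pk (phi k) i j).
    by apply: funext => k; rewrite -{1}(Psym (phi k)) mxE.
  exact: hPc.
have Pid : P *m P = P.
  apply/matrixP => i j.
  have h1 := cvg_mul_entry (A := fun k => Pk (phi k)) (B := fun k => Pk (phi k)) hPc hPc (i := i) (j := j).
  rewrite /= in h1.
  have E : (fun k => (Pk (phi k) *m Pk (phi k)) i j) = (fun k => Pk (phi k) i j).
    by apply: funext => k; rewrite Pidem.
  rewrite E in h1; exact: lim_eqR h1 (hPc i j).
have hN1 := cvg_N1 hPc.
have [j0 hj0] : exists j, N1 (Pk (phi j) - P) < 1.
  have : \forall k \near \oo, ball (0 : R) 1 (N1 (Pk (phi k) - P)).
    by apply: cvg_ball => //; exact: ltr01.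
  move=> /filter_ex [j hj]; exists j; move: hj.
  by rewrite ball_normP sub0r normrN; apply: le_lt_trans; exact: ler_norm.
have rP : \rank P = m.
  have h1 : (\rank P <= \rank (Pk (phi j0)))%N.
    by apply: rank_le_idem => //; rewrite N1_sym.
  have h2 : (\rank (Pk (phi j0)) <= \rank P)%N by apply: rank_le_idem.
  rewrite Prank in h1 h2; apply/eqP; by rewrite eqn_leq h1 h2.
pose L := [set u : 'rV[R]_(m + m) | (u <= P)%MS].
have HLs : is_subspace_dim m L := subspace_of_rank rP.
have HLo : is_orth_proj L P := orth_of_symidem Psy Pid.
have projL : Defs.proj_mx L = P := orth_uniq HLs (proj_mx_spec HLs) HLo.

have einv : forall k, 0 < k.+1%:R^-1 :> R by move=> k; rewrite invr_gt0 ltr0n.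
have hY : Y @ \oo --> F xbar.
  have -> : Y = fun k => (Y k - (F (xs k) + bs k)) + (F (xs k) + bs k).
    by apply: funext => k; rewrite subrK.
  rewrite -[F xbar]add0r; apply: cvgD.
    apply: ball_seq_cvg => k; rewrite ball_normP sub0r normrN -normrN opprB.
    by case: (H7 k) => _ [+ _]; rewrite ball_normP.
  rewrite -[F xbar]addr0; apply: cvgD => //.
  exact: (cvg_comp _ _ hxs Fcont).
have hYS : YS @ \oo --> ybs.
  have -> : YS = fun k => (YS k - ysk k) + ysk k.
    by apply: funext => k; rewrite subrK.
  rewrite -[ybs]add0r; apply: cvgD => //.
  apply: ball_seq_cvg => k; rewrite ball_normP sub0r normrN -normrN opprB.
  by case: (H7 k) => _ [_ [+ _]]; rewrite ball_normP.
have HSC : SCderiv g (F xbar) ybs L.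
  split => //; exists (Y \o phi), (YS \o phi); split.
    by move=> k; case: (H7 (phi k)) => -[].
  split; first exact: (cvg_comp _ _ phioo hY).
  split; first exact: (cvg_comp _ _ phioo hYS).
  rewrite /sub_dist projL /=.
  apply: (@squeeze_cvgr _ _ _ _ (fun=> 0) (fun k => N1 (Pk (phi k) - P))).
  - by near=> k; rewrite opnorm_ge0 opnorm_le.
  - exact: cvg_cst.
  - exact: hN1.

have Hw : forall k, enorm (row_mx (0 : 'rV[R]_m) (vs k) *m Pk k - row_mx (0 : 'rV[R]_m) (vs k))
    < k.+1%:R^-1.
  move=> k; case: (H5 k) => _ _ _ Lw e1.
  have fx := orth_fix (HL k) (HQo k) Lw.
  rewrite -{2}fx -mulmxBr.
  apply: le_lt_trans (opnorm_ub _ _) _; first by rewrite enorm_row0 e1.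
  by case: (H7 k) => _ [_ [_ +]].
have hwc : forall i j, (fun k => row_mx (0 : 'rV[R]_m) (vs (phi k)) i j) @ \oo
    --> row_mx (0 : 'rV[R]_m) v i j.
  move=> i j; rewrite (ord1 i) -(fintype.splitK j).
  case: (fintype.split j) => a /=.
    rewrite row_mxEl.
    have -> : (fun k => row_mx (0 : 'rV[R]_m) (vs (phi k)) ord0 (lshift m a)) = fun=> 0.
      by apply: funext => k; rewrite row_mxEl mxE.
    rewrite mxE; exact: cvg_cst.
  rewrite row_mxEr.
  have -> : (fun k => row_mx (0 : 'rV[R]_m) (vs (phi k)) ord0 (rshift m a)) =
      fun k => vs (phi k) ord0 a.
    by apply: funext => k; rewrite row_mxEr.
  exact: hvc.
have hW : row_mx (0 : 'rV[R]_m) v *m P = row_mx (0 : 'rV[R]_m) v.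
  apply/matrixP => i j; apply/eqP; rewrite -subr_eq0; apply/eqP.
  have h1 : (fun k => (row_mx (0 : 'rV[R]_m) (vs (phi k)) *m Pk (phi k)) i j) @ \oo -->
      (row_mx (0 : 'rV[R]_m) v *m P) i j.
    exact: (cvg_mul_entry (A := fun k => row_mx (0 : 'rV[R]_m) (vs (phi k)))
      (B := fun k => Pk (phi k)) hwc hPc (i := i) (j := j)).
  have h2 := cvgB h1 (hwc i j).
  have h3 : (fun k => (row_mx (0 : 'rV[R]_m) (vs (phi k)) *m Pk (phi k)) i j -
      row_mx (0 : 'rV[R]_m) (vs (phi k)) i j) @ \oo --> (0 : R).
    apply: ball_seq_cvg => k; rewrite ball_normP sub0r normrN (ord1 i).
    apply: le_lt_trans (entry_sub_le _ _ _) _.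
    apply: lt_le_trans (Hw (phi k)) _.
    rewrite lef_pV2 ?posrE ?ltr0n // ler_nat ltnS; exact: (Hphi' k).1.
  exact: (lim_eqR (h2 _) h3).
have hLv : L (row_mx (0 : 'rV[R]_m) v) by rewrite /L /= -hW submxMl.
have hJ0 : v *m ('J F xbar)^T = 0.
  apply/matrixP => i j; rewrite [in RHS]mxE.
  have h1 : (fun k => (vs (phi k) *m ('J F (xs (phi k)))^T) i j) @ \oo -->
      (v *m ('J F xbar)^T) i j.
    exact: (cvg_mul_entry (A := fun k => vs (phi k))
      (B := fun k => ('J F (xs (phi k)))^T) hvc hJc (i := i) (j := j)).
  have E : (fun k => (vs (phi k) *m ('J F (xs (phi k)))^T) i j) = fun=> 0.
    by apply: funext => k; case: (H5 (phi k)) => _ _ -> _ _; rewrite mxE.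
  rewrite E in h1; apply: (lim_eqR h1); exact: cvg_cst.
have hv1 : dotv v v = 1.
  have h1 : (fun k => dotv (vs (phi k)) (vs (phi k))) @ \oo --> dotv v v.
    rewrite /dotv; apply: cvg_sumR => i; apply: cvgM; exact: hvc.
  have E : (fun k => dotv (vs (phi k)) (vs (phi k))) = fun=> 1.
    apply: funext => k; rewrite -enorm_sq.
    by case: (H5 (phi k)) => _ _ _ _ ->; rewrite expr1n.
  rewrite E in h1; apply: (lim_eqR h1); exact: cvg_cst.
have hv0 := Hsoqc L HSC v hJ0 hLv.
have : dotv (0 : 'rV[R]_m) 0 = 0 by rewrite /dotv big1 // => i _; rewrite mxE mul0r.
by rewrite -hv0 hv1 => /eqP; rewrite oner_eq0.
Unshelve. all: end_near. Qed.
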